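(* Let $k\ge2$ be the cache size, let $1\le r\le k-1$ and $N=k+r$. For the cycle access graph $C_N$ on $N$ vertices, \[\mathcal{I}^{C_N}[\mathrm{FWF},\mathrm{LRU}]=\left[0,\ 1-\frac1k\right].\]
   Context: Paging: a cache holds at most $k$ pages and is initially empty. A request to a page in the cache is a hit; otherwise it is a fault, the page is brought into the cache, evicting a page first if the cache is full. $\mathcal{A}(I)$ is the number of faults of $\mathcal{A}$ on request sequence $I$. LRU evicts the least recently requested cached page; FWF, on a fault with a full cache, empties the cache and then brings in the requested page. Access graph: a graph $G$ whose vertices are the pages; a request sequence respects $G$ if any two consecutive requests are identical or adjacent in $G$; $L(G)$ is the set of such sequences. $C_N$ is the cycle on $N$ vertices. Relative interval: $\mathrm{Min}_{\mathcal{A},\mathcal{B}}(n,G)=\min\{\mathcal{A}(I)-\mathcal{B}(I): I\in L(G),|I|=n\}$, $\mathrm{Max}_{\mathcal{A},\mathcal{B}}(n,G)$ analogously with max; $\mathrm{Min}^G(\mathcal{A},\mathcal{B})=\liminf_{n\to\infty}\mathrm{Min}_{\mathcal{A},\mathcal{B}}(n,G)/n$, $\mathrm{Max}^G(\mathcal{A},\mathcal{B})=\limsup_{n\to\infty}\mathrm{Max}_{\mathcal{A},\mathcal{B}}(n,G)/n$, and $\mathcal{I}^G[\mathcal{A},\mathcal{B}]=[\mathrm{Min}^G(\mathcal{A},\mathcal{B}),\mathrm{Max}^G(\mathcal{A},\mathcal{B})]$. *)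

(* Defs.v *)
From mathcomp Require Import all_boot all_order all_algebra.
From mathcomp Require Import all_classical all_reals all_analysis.
Set Implicit Arguments. Unset Strict Implicit. Unset Printing Implicit Defensive.
Import Order.TTheory GRing.Theory Num.Theory.
Local Open Scope classical_set_scope.
Local Open Scope ring_scope.

Section Paging.
Variable T : eqType.

(* A paging algorithm, for cache size k, maps a request sequence to its
   number of faults.  Caches start empty. *)

(* LRU: the cache is kept as a list ordered by recency (most recent first);
   on a fault with a full cache the last (least recently requested) page is
   evicted. *)
Fixpoint lru_run (k : nat) (c : seq T) (s : seq T) : nat :=
  match s with
  | [::] => 0
  | p :: s' =>
      if p \in c then lru_run k (p :: rem p c) s'
      else (lru_run k (p :: (if (size c < k)%N then c else take k.-1 c)) s').+1
  end.

Definition LRU (k : nat) (s : seq T) : nat := lru_run k [::] s.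

Fixpoint fwf_run (k : nat) (c : seq T) (s : seq T) : nat :=
  match s with
  | [::] => 0
  | p :: s' =>
      if p \in c then fwf_run k c s'
      else (fwf_run k (if (size c < k)%N then p :: c else [:: p]) s').+1
  end.

Definition FWF (k : nat) (s : seq T) : nat := fwf_run k [::] s.
End Paging.

Definition respects (T : eqType) (G : rel T) (s : seq T) : bool :=
  sorted (fun a b => (a == b) || G a b) s.

Section RelInterval.
Variables (R : realType) (T : finType) (G : rel T) (A B : seq T -> nat).

Definition MinAB (n : nat) : \bar R :=
  ereal_inf [set (((A t)%:R - (B t)%:R : R))%:E
            | t in [set t : n.-tuple T | respects G t]].

Definition MaxAB (n : nat) : \bar R :=
  ereal_sup [set (((A t)%:R - (B t)%:R : R))%:E
            | t in [set t : n.-tuple T | respects G t]].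

Definition MinG : \bar R :=
  limn_einf (fun n => (MinAB n * ((n%:R : R)^-1)%:E)%E).
Definition MaxG : \bar R :=
  limn_esup (fun n => (MaxAB n * ((n%:R : R)^-1)%:E)%E).
End RelInterval.

Definition cycle_adj (N : nat) : rel 'I_N :=
  fun i j => ((val j == (val i).+1 %% N) || (val i == (val j).+1 %% N))%N.

(* Main.v *)
Require Import Defs.
From mathcomp Require Import all_boot all_order all_algebra.
From mathcomp Require Import all_classical all_reals all_analysis.
From mathcomp Require Import zify.
Set Implicit Arguments. Unset Strict Implicit.
Lemma take_rem_perm (T : eqType) (p : T) n l : p \in take n l -> perm_eq (take n (p :: rem p l)) (take n l).
Proof.
elim: l n => [|x l IH] [|n] //=.
rewrite inE; case: (eqVneq x p) => [->|xp] /= Hp; first exact: perm_refl.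
case: n Hp => [|n] Hp; first by rewrite take0 in Hp.
have := IH n.+1 Hp => /= H.
apply: (@perm_trans _ (x :: p :: take n (rem p l))).
  by rewrite (perm_catCA [:: p] [:: x]).
by rewrite perm_cons.
Qed.
Lemma take_rem_notin (T : eqType) (p : T) n l : p \notin take n l -> take n (rem p l) = take n l.
Proof.
elim: l n => [|x l IH] [|n] //=; first by rewrite take0.
rewrite inE negb_or eq_sym => /andP[/negbTE -> Hp] /=.
by rewrite IH.
Qed.
From mathcomp Require Import zify.

Section Gen.
Variable T : eqType.
Implicit Types (c l s : seq T) (p : T).

Definition lru_next k l p := if p \in l then p :: rem p l
  else p :: (if (size l < k)%N then l else take k.-1 l).
Definition fwf_next k c p := if p \in c then c
  else if (size c < k)%N then p :: c else [:: p].

Lemma lru_cons k l p s : lru_run k l (p :: s) = (p \notin l) + lru_run k (lru_next k l p) s.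
Proof. by rewrite /= /lru_next; case: (p \in l). Qed.

Lemma fwf_cons k c p s : fwf_run k c (p :: s) = (p \notin c) + fwf_run k (fwf_next k c p) s.
Proof. by rewrite /= /fwf_next; case: (p \in c). Qed.

Definition Inv k c l := [&& (size c <= k)%N, (size l <= k)%N & perm_eq (take (size c) l) c].

Lemma inv_hit k c l p : Inv k c l -> p \in c -> p \in take (size c) l.
Proof. by case/and3P=> _ _ /perm_mem ->. Qed.

Lemma inv_full k c l p : Inv k c l -> size c = k -> p \notin c -> p \notin l.
Proof.
case/and3P=> _ Hl /perm_mem Hp Hc; rewrite -Hp Hc take_oversize //.
Qed.

Lemma inv_next k c l p : (0 < k)%N -> Inv k c l -> Inv k (fwf_next k c p) (lru_next k l p).
Proof.
move=> k0 Hi; have Hi' := Hi; case/and3P: Hi' => Hc Hl Hpe.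
have Hsl : (size (lru_next k l p) <= k)%N.
  rewrite /lru_next; case: ifP => Hpl /=.
    by rewrite size_rem // prednK ?Hl // -has_predT; apply/hasP; exists p.
  case: ifP => Hlk; first by [].
  rewrite size_take -!subn1; case: ifP => H /=; lia.
rewrite /fwf_next; case: ifP => Hpc.
  apply/and3P; split => //.
  have Ht := inv_hit Hi Hpc.
  have Hpl : p \in l by apply: mem_take Ht.
  rewrite /lru_next Hpl /=.
exact: perm_trans (take_rem_perm Ht) Hpe.
have Hpt : p \notin take (size c) l by rewrite (perm_mem Hpe) Hpc.
case: ifP => Hck /=; apply/and3P; split => //.
- rewrite /lru_next; case: ifP => Hpl /=; rewrite perm_cons.
    by rewrite take_rem_notin.
  case: ifP => _ //. by rewrite take_takel //; lia.
- by rewrite /lru_next; case: ifP => _ /=; rewrite take0.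
Qed.

Lemma lru_le_fwf k s : forall c l, (0 < k)%N -> Inv k c l -> (lru_run k l s <= fwf_run k c s)%N.
Proof.
elim: s => [|p s IH] c l k0 Hi; first by [].
rewrite lru_cons fwf_cons.
have := IH _ _ k0 (inv_next p k0 Hi).
case Hpc : (p \in c) => /=.
  by rewrite (mem_take (inv_hit Hi Hpc)).
by case: (p \in l) => /=; lia.
Qed.

Lemma fwf_bound k s : forall c l, (0 < k)%N -> Inv k c l ->
  (k * fwf_run k c s + size c <= k * lru_run k l s + (k-1) * size s + k)%N.
Proof.
elim: s => [|p s IH] c l k0 Hi.
  by case/and3P: Hi => /= *; lia.
rewrite lru_cons fwf_cons.
have := IH _ _ k0 (inv_next p k0 Hi).
have Hck : (size c <= k)%N by case/and3P: Hi.
case Hpc : (p \in c) => /=.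
  by rewrite (mem_take (inv_hit Hi Hpc)) /fwf_next Hpc /=; nia.
rewrite /fwf_next Hpc; case: ifP => Hlt /=.
  by case: (p \in l) => /=; nia.
have Hsc : size c = k by lia.
by rewrite (negbTE (inv_full Hi Hsc (negbT Hpc))) /=; nia.
Qed.

Lemma LRU_le_FWF k s : (0 < k)%N -> (LRU k s <= FWF k s)%N.
Proof. by move=> k0; apply: lru_le_fwf => //; rewrite /Inv /= take0. Qed.

Lemma FWF_bound k s : (0 < k)%N -> (k * FWF k s <= k * LRU k s + (k-1) * size s)%N.
Proof.
move=> k0; case: s => [|p s]; first by rewrite /FWF /LRU /=; lia.
rewrite /FWF /LRU lru_cons fwf_cons /lru_next /fwf_next /= k0.
have Hi : Inv k [:: p] [:: p] by rewrite /Inv /= k0 perm_refl.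
have := fwf_bound s k0 Hi => /=; nia.
Qed.

Lemma fill_fwf k a : forall c s, uniq (a ++ c) -> (size a + size c <= k)%N ->
  fwf_run k c (a ++ s) = size a + fwf_run k (rev a ++ c) s.
Proof.
elim: a => [|x a IH] c s //= /andP[Hx Hu] Hs.
rewrite mem_cat negb_or in Hx; case/andP: Hx => Hxa Hxc.
rewrite (negbTE Hxc) ifT; last by lia.
rewrite IH ?rev_cons ?cat_rcons //=; last by lia.
by rewrite -cat1s uniq_catCA /= mem_cat negb_or Hxa Hxc.
Qed.

Lemma fill_lru k a : forall l s, uniq (a ++ l) -> (size a + size l <= k)%N ->
  lru_run k l (a ++ s) = size a + lru_run k (rev a ++ l) s.
Proof.
elim: a => [|x a IH] l s //= /andP[Hx Hu] Hs.
rewrite mem_cat negb_or in Hx; case/andP: Hx => Hxa Hxc.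
rewrite (negbTE Hxc) ifT; last by lia.
rewrite IH ?rev_cons ?cat_rcons //=; last by lia.
by rewrite -cat1s uniq_catCA /= mem_cat negb_or Hxa Hxc.
Qed.

Lemma rem_cat_notin (x : T) acc t : x \notin acc -> rem x (acc ++ x :: t) = acc ++ t.
Proof.
elim: acc => [|y acc IH] /=; first by rewrite eqxx.
by rewrite inE negb_or eq_sym => /andP[/negbTE -> H]; rewrite IH.
Qed.

Lemma sweep_lru k a : forall acc b s, uniq (acc ++ a ++ b) ->
  lru_run k (acc ++ a ++ b) (a ++ s) = lru_run k (rev a ++ acc ++ b) s.
Proof.
elim: a => [|x a IH] acc b s //= Hu.
have Hin : x \in acc ++ x :: a ++ b by rewrite mem_cat inE eqxx orbT.
have Hxacc : x \notin acc.
  by move: Hu; rewrite cat_uniq /= => /and3P[_ /norP[H _] _].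
rewrite Hin rem_cat_notin //.
have := IH (x :: acc) b s; rewrite rev_cons cat_rcons /=; apply.
by move: Hu; rewrite -cat1s uniq_catCA.
Qed.

Lemma half_fwf k (x y : T) A s : uniq (x :: y :: A) -> size A = k.-1 -> (0 < k)%N ->
  fwf_run k [:: x] (A ++ y :: s) = k + fwf_run k [:: y] s.
Proof.
move=> Hu HA k0.
rewrite fill_fwf; last by rewrite /= HA; lia.
  rewrite fwf_cons /fwf_next.
  have Hy : y \notin rev A ++ [:: x].
    move: Hu => /=; rewrite !inE mem_cat mem_rev inE => /andP[H1 /andP[H2 _]].
    by rewrite negb_or H2 eq_sym; move: H1; rewrite negb_or => /andP[-> _].
  rewrite (negbTE Hy) size_cat size_rev HA /= ifF; last by lia.
  by rewrite addnA addn1 prednK.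
rewrite uniq_catC /=; move: Hu => /= /andP[H1 /andP[_ ->]]; move: H1; rewrite inE negb_or => /andP[_ ->].
by [].
Qed.

Lemma half_lru k (x y : T) A s : uniq (x :: y :: A) -> size A = k.-1 -> (0 < k)%N ->
  lru_run k (x :: A) (A ++ y :: s) = 1 + lru_run k (y :: rev A) s.
Proof.
move=> Hu HA k0.
have := @sweep_lru k A [:: x] [::] (y :: s).
rewrite cats0 /= => ->; last first.
  by move: Hu => /= /andP[H1 /andP[_ ->]]; move: H1; rewrite inE negb_or => /andP[_ ->].
idtac.
have Hy : y \notin rev A ++ [:: x].
  move: Hu => /=; rewrite !inE mem_cat mem_rev inE => /andP[H1 /andP[H2 _]].
  by rewrite negb_or H2 eq_sym; move: H1; rewrite negb_or => /andP[-> _].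
rewrite (negbTE Hy) size_cat size_rev HA /= ifF; last by lia.
by rewrite take_size_cat // size_rev HA.
Qed.

Lemma uniq_swap (x y : T) A : uniq (x :: y :: A) -> uniq (y :: x :: rev A).
Proof.
rewrite /= !inE !mem_rev rev_uniq => /andP[/norP[H1 H2] /andP[H3 H4]].
by rewrite eq_sym (negbTE H1) (negbTE H3) H2 H4.
Qed.

Definition blk (x y : T) A := A ++ y :: rev A ++ [:: x].
Definition pre (x y : T) A := y :: rev A ++ [:: x].

Lemma blk_cat (x y : T) A s : blk x y A ++ s = A ++ y :: (rev A ++ x :: s).
Proof. by rewrite /blk -catA /= -catA. Qed.

Lemma blk_fwf k (x y : T) A s : uniq (x :: y :: A) -> size A = k.-1 -> (0 < k)%N ->
  fwf_run k [:: x] (blk x y A ++ s) = 2 * k + fwf_run k [:: x] s.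
Proof.
move=> Hu HA k0; rewrite blk_cat half_fwf // half_fwf //; first lia.
  exact: uniq_swap.
by rewrite size_rev.
Qed.

Lemma blk_lru k (x y : T) A s : uniq (x :: y :: A) -> size A = k.-1 -> (0 < k)%N ->
  lru_run k (x :: A) (blk x y A ++ s) = 2 + lru_run k (x :: A) s.
Proof.
move=> Hu HA k0; rewrite blk_cat half_lru // half_lru ?revK //.
  exact: uniq_swap.
by rewrite size_rev.
Qed.

Lemma size_blk k (x y : T) A : size A = k.-1 -> (0 < k)%N -> size (blk x y A) = 2 * k.
Proof. by move=> HA k0; rewrite /blk size_cat /= size_cat size_rev HA /=; lia. Qed.

Lemma inv0 k (x : T) A : size A = k.-1 -> (0 < k)%N -> Inv k [:: x] (x :: A).
Proof. by move=> HA k0; rewrite /Inv /= HA take0 perm_refl; lia. Qed.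

Lemma rep k (x y : T) A : uniq (x :: y :: A) -> size A = k.-1 -> (0 < k)%N ->
  forall M j, (j <= 2 * k * M)%N ->
  (k * lru_run k (x :: A) (take j (flatten (nseq M (blk x y A)))) + (k-1) * j
   <= k * fwf_run k [:: x] (take j (flatten (nseq M (blk x y A)))) + 2 * k * (k-1))%N.
Proof.
move=> Hu HA k0; elim=> [|M IH] j Hj.
  have -> : j = 0 by lia.
  by rewrite /=; lia.
rewrite /= take_cat (size_blk x y HA k0).
case: ifP => Hjk.
  have := lru_le_fwf (take j (blk x y A)) k0 (inv0 x HA k0).
  by nia.
rewrite blk_fwf // blk_lru //.
have := IH (j - 2 * k) ltac:(lia).
by nia.
Qed.

Lemma pre_fwf k (x y : T) A s : uniq (x :: y :: A) -> size A = k.-1 -> (0 < k)%N ->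
  fwf_run k [::] (pre x y A ++ s) = k.+1 + fwf_run k [:: x] s.
Proof.
move=> Hu HA k0; rewrite /pre /= -catA /= k0 half_fwf //.
  exact: uniq_swap.
by rewrite size_rev.
Qed.

Lemma pre_lru k (x y : T) A s : uniq (x :: y :: A) -> size A = k.-1 -> (0 < k)%N ->
  lru_run k [::] (pre x y A ++ s) = k.+1 + lru_run k (x :: A) s.
Proof.
move=> Hu HA k0; rewrite /pre /= -catA /= k0.
have Hs := uniq_swap Hu.
rewrite fill_lru; last first.
- by rewrite /= size_rev HA; lia.
- by rewrite uniq_catC; move: Hs => /= /andP[H1 /andP[_ ->]]; move: H1; rewrite inE negb_or => /andP[_ ->].
rewrite revK /=.
have Hx : x \notin A ++ [:: y].
  move: Hu => /= /andP[H _]; move: H; rewrite mem_cat !inE !negb_or andbC; exact: id.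
rewrite (negbTE Hx) size_cat /= HA ifF; last by lia.
rewrite take_size_cat // size_rev HA; lia.
Qed.

Definition W (x y : T) A n := take n (pre x y A ++ flatten (nseq n (blk x y A))).

Lemma size_W k (x y : T) A n : size A = k.-1 -> (0 < k)%N -> size (W x y A n) = n.
Proof.
move=> HA k0; rewrite /W size_take size_cat.
have H : forall M, size (flatten (nseq M (blk x y A))) = M * (2 * k).
  by elim=> [|M IH] //=; rewrite size_cat IH (size_blk x y HA k0); lia.
by rewrite H; case: ifP => //; nia.
Qed.

Lemma W_bound k (x y : T) A n : uniq (x :: y :: A) -> size A = k.-1 -> (0 < k)%N ->
  (k * LRU k (W x y A n) + (k-1) * n <= k * FWF k (W x y A n) + 2 * k * (k-1) + (k-1) * k.+1)%N.
Proof.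
move=> Hu HA k0; rewrite /W take_cat.
have Hsp : size (pre x y A) = k.+1 by rewrite /pre /= size_cat size_rev HA /=; lia.
rewrite Hsp; case: ifP => Hn.
  have := LRU_le_FWF (take n (pre x y A)) k0; nia.
rewrite /FWF /LRU pre_fwf // pre_lru //.
have := @rep k x y A Hu HA k0 n (n - k.+1) ltac:(nia).
nia.
Qed.
End Gen.

Section NatPath.
Variable k : nat.
Definition Rn (a b : nat) := [&& ((b == a.+1) || (a == b.+1)), (a <= k)%N & (b <= k)%N].

Lemma L1 j : forall a t, (a + j <= k)%N -> path Rn a (iota a.+1 j ++ t) = path Rn (a + j) t.
Proof.
elim: j => [|j IH] a t H; first by rewrite addn0.
rewrite /= IH; last by lia.
rewrite addSnnS; have -> : Rn a a.+1 by rewrite /Rn eqxx /=; apply/andP; split; lia.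
by [].
Qed.

Lemma iota_rc j : iota 1 j.+1 = iota 1 j ++ [:: j.+1].
Proof. by have := iotaD 1 j 1; rewrite addn1 add1n. Qed.

Lemma L2 j : forall t, (j.+1 <= k)%N -> path Rn j.+1 (rev (iota 1 j) ++ 0 :: t) = path Rn 0 t.
Proof.
elim: j => [|j IH] t H.
  by rewrite /= /Rn /=; have -> : (1 <= k)%N by lia.
rewrite iota_rc rev_cat /= IH; last by lia.
have -> : Rn j.+2 j.+1 by rewrite /Rn eqxx orbT /=; apply/andP; split; lia.
by [].
Qed.
End NatPath.

Lemma pathB m M : path (Rn m.+1) m.+1 (flatten (nseq M (blk m.+1 0 (rev (iota 1 m))))).
Proof.
elim: M => [|M IH] //=.
rewrite blk_cat revK L2 // L1 //= add0n IH andbT /Rn eqxx /=; apply/andP; split; lia.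
Qed.

Lemma sortW m n : sorted (Rn m.+1) (W m.+1 0 (rev (iota 1 m)) n).
Proof.
rewrite /W.
set s := (pre _ _ _ ++ _).
have Hs : sorted (Rn m.+1) s.
  rewrite /s /pre revK /= -catA /= L1 // add0n /= pathB andbT /Rn eqxx /=; apply/andP; split; lia.
by move: Hs; rewrite -{1}(cat_take_drop n s) => /cat_sorted2 [].
Qed.

Lemma W_map (T U : eqType) (f : T -> U) x y A n :
  W (f x) (f y) (map f A) n = map f (W x y A n).
Proof.
rewrite /W map_take map_cat map_flatten map_nseq /pre /blk /=.
by rewrite !map_cat /= map_cat map_rev.

Qed.

Lemma nseq_eq (T : eqType) k (x : T) n : (0 < k)%N -> FWF k (nseq n x) = LRU k (nseq n x).
Proof.
move=> k0; case: n => [|n] //; rewrite /FWF /LRU /= k0.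
elim: n => [|n IH] //=.
by rewrite mem_seq1 !eqxx /=.
Qed.

Lemma path_nseq (T : eqType) (e : rel T) (x : T) n : e x x -> path e x (nseq n x).
Proof. by move=> H; elim: n => [|n IH] //=; rewrite H. Qed.

Import Order.TTheory GRing.Theory Num.Theory.
From mathcomp Require Import lra.
Import numFieldNormedType.Exports.
Local Open Scope ring_scope.

Lemma rb_upper (R : realType) (k F L n : nat) : (0 < k)%N ->
  (k * F <= k * L + (k-1) * n)%N ->
  (F%:R - L%:R : R) <= (1 - k%:R^-1) * n%:R.
Proof.
move=> k0 H.
have kR : (0:R) < k%:R by rewrite ltr0n.
have : ((k * F)%N%:R : R) <= ((k * L + (k-1) * n)%N)%:R by rewrite ler_nat.
rewrite natrD !natrM natrB; last by lia.
move=> H2.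
rewrite -(ler_pM2l kR) mulrBr mulrA mulrBr mulr1 (mulfV (lt0r_neq0 kR)).
lra.
Qed.

Lemma rb_lower (R : realType) (k F L n C : nat) : (0 < k)%N -> (0 < n)%N ->
  (k * L + (k-1) * n <= k * F + C)%N ->
  (1 - k%:R^-1) - (C%:R / k%:R) * n%:R^-1 <= ((F%:R - L%:R) : R) * n%:R^-1.
Proof.
move=> k0 n0 H.
have kR : (0:R) < k%:R by rewrite ltr0n.
have nR : (0:R) < n%:R by rewrite ltr0n.
have : ((k * L + (k-1) * n)%N%:R : R) <= ((k * F + C)%N)%:R by rewrite ler_nat.
rewrite !natrD !natrM natrB; last by lia.
move=> H2.
have h1 : (1 - k%:R^-1) * n%:R - C%:R / k%:R <= (F%:R - L%:R : R).
  rewrite -(ler_pM2l kR) mulrBr mulrA mulrBr mulr1 (mulfV (lt0r_neq0 kR)).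
  rewrite mulrCA (mulfV (lt0r_neq0 kR)) mulr1.
  lra.
have ni : (0:R) <= n%:R^-1 by rewrite invr_ge0 ltW.
have := ler_wpM2r ni h1.
by rewrite mulrBl mulfK // (lt0r_neq0 nR).
Qed.

Theorem theorem8 (R : realType) (k r : nat) :
  (2 <= k)%N -> (1 <= r)%N -> (r <= k - 1)%N ->
  let N := (k + r)%N in
  MinG R (@cycle_adj N) (@FWF _ k) (@LRU _ k) = 0%E /\
  MaxG R (@cycle_adj N) (@FWF _ k) (@LRU _ k) = (1 - (k%:R)^-1)%:E.
Proof.
move=> k2 r1 _ N.
have k0 : (0 < k)%N by lia.
have hN : (0 < N)%N by rewrite /N; lia.
pose o0 : 'I_N := Ordinal hN.
split.
  have Min0 : forall n, MinAB R (@cycle_adj N) (@FWF _ k) (@LRU _ k) n = 0%E.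
    move=> n; apply/le_anti/andP; split.
      apply: ereal_inf_lbound; exists (nseq_tuple n o0).
        rewrite /= /respects; case: n => //= n; apply: path_nseq; by rewrite eqxx.
      by rewrite /= nseq_eq // subrr.
    apply: le_ereal_inf_tmp => _ [t _ <-]; rewrite lee_fin subr_ge0 ler_nat; exact: LRU_le_FWF.
  rewrite /MinG.
  have -> : (fun n => (MinAB R (@cycle_adj N) (@FWF _ k) (@LRU _ k) n * (n%:R^-1)%:E)%E) = (fun _ => 0%E).
    by apply/funext => n; rewrite Min0 mul0e.
  by have [-> _] := @cvg_limn_einf_sup R (fun _ => 0%E) 0%E (cvg_cst _).
pose f : nat -> 'I_N := fun i => insubd o0 i.
have fval : forall i, (i < N)%N -> val (f i) = i by move=> i Hi; rewrite /f val_insubd Hi.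
pose m := k.-1.
have km : k = m.+1 by rewrite /m; lia.
pose An := rev (iota 1 m).
pose x := f k. pose y := f 0. pose A := map f An.
have HA : size A = k.-1 by rewrite size_map size_rev size_iota.
have Hall : forall i, i \in k :: 0 :: An -> (i < N)%N.
  move=> i; rewrite !inE mem_rev mem_iota => /or3P[/eqP->|/eqP->|/andP[_ ?]]; rewrite /N; lia.
have Hu : uniq (x :: y :: A).
  have -> : x :: y :: A = map f (k :: 0 :: An) by [].
  rewrite (map_inj_in_uniq (f := f)).
    rewrite /= !inE mem_rev mem_iota rev_uniq iota_uniq mem_rev mem_iota /= andbT.
    by apply/negP => /orP[/eqP|/andP[_]]; lia.
  move=> i j Hi Hj /(congr1 val); rewrite !fval //; exact: Hall.
have L0 : (0:R) <= 1 - k%:R^-1.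
  rewrite subr_ge0 invf_le1 ?ltr0n // ler1n; lia.
rewrite /MaxG.
set u := (fun n => _).
have ub : forall n, (u n <= (1 - k%:R^-1)%:E)%E.
  move=> n; rewrite /u.
  case: n => [|n]; first by rewrite invr0 mule0 lee_fin.
  have H1 : (MaxAB R (cycle_adj (N:=N)) (FWF k) (LRU k) n.+1 <= ((1 - k%:R^-1) * n.+1%:R)%:E)%E.
    apply: ge_ereal_sup => _ [t _ <-]; rewrite lee_fin.
    apply: rb_upper => //; have := FWF_bound (tval t) k0; by rewrite size_tuple.
  have h0 : (0 <= ((n.+1)%:R^-1 : R)%:E)%E by rewrite lee_fin invr_ge0.
  apply: le_trans (lee_wpmul2r h0 H1) _.
  by rewrite -EFinM lee_fin mulfK // pnatr_eq0.
pose C := (2 * k * (k-1) + (k-1) * k.+1)%N.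
pose c := (C%:R / k%:R : R).
pose v := fun n : nat => ((1 - k%:R^-1) - c * n%:R^-1)%:E.
have lb : forall n, (0 < n)%N -> (v n <= u n)%E.
  move=> n n0; rewrite /u /v.
  have Hw := @W_bound _ k x y A n Hu HA k0.
  have st : size (W x y A n) == n by rewrite (@size_W _ k x y A n HA k0).
  have H1 : (((FWF k (W x y A n))%:R - (LRU k (W x y A n))%:R : R)%:E
      <= MaxAB R (cycle_adj (N:=N)) (FWF k) (LRU k) n)%E.
    apply: ereal_sup_ubound; exists (Tuple st) => //.
    rewrite /= /respects /x /y /A W_map sorted_map.
    have Ws : sorted (Rn k) (W k 0 An n) by rewrite km; exact: sortW.
    apply: sub_sorted Ws => a b /and3P[H ak bk].
    have aN : (a < N)%N by rewrite /N; lia.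
    have bN : (b < N)%N by rewrite /N; lia.
    apply/orP; right; rewrite /cycle_adj !fval //.
    case/orP: H => /eqP E.
      have E1 : (a.+1 < N)%N by rewrite -E.
      by rewrite E (modn_small E1) eqxx.
    have E1 : (b.+1 < N)%N by rewrite -E.
    by rewrite E (modn_small E1) eqxx orbT.
  have h0 : (0 <= ((n%:R)^-1 : R)%:E)%E by rewrite lee_fin invr_ge0.
  apply: le_trans _ (lee_wpmul2r h0 H1).
  rewrite -EFinM lee_fin.
  have := @rb_lower R k (FWF k (W x y A n)) (LRU k (W x y A n)) n C k0 n0 ltac:(by rewrite /C addnA).
  by [].
have hv : (v @ \oo --> (1 - k%:R^-1)%:E)%classic.
  apply: cvg_EFin; first exact: nearW.
  rewrite -(@cvg_shiftS R).
  have : ((fun n => (1 - k%:R^-1) - c * harmonic n) @ \oo --> (1 - k%:R^-1) - c * 0)%classic.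
    apply: cvgB; first exact: cvg_cst.
    by apply: cvgM; [exact: cvg_cst|exact: cvg_harmonic].
  by rewrite mulr0 subr0.
apply/le_anti/andP; split.
  rewrite limn_esup_lim; apply: lime_le; first exact: is_cvg_esups.
  by apply: nearW => n; apply: ge_ereal_sup => _ [j _ <-]; exact: ub.
have [_ <-] := cvg_limn_einf_sup hv.
rewrite !limn_esup_lim; apply: lee_lim; [exact: is_cvg_esups|exact: is_cvg_esups|].
exists 1%N => // n /= n1.
apply: ge_ereal_sup => _ [j /= jn <-].
apply: le_trans (lb j _) _; first by lia.
by apply: ereal_sup_ubound; exists j.
Qed.
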